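(* In the Poisson-driven SDE setting, let $\psi:\mathcal K\times\mathcal N^\#_{\mathbb R\times\mathcal K}\to[0,\infty]$ be any measurable functional and $N_{\le0}$ any initial condition. If $N,N':\Omega\to\mathcal N^{\#g}_{\mathbb R\times\mathcal K}$ are two non-explosive marked point processes that both solve the Poisson-driven SDE with intensity functional $\psi$ and initial condition $N_{\le0}$, then $N=N'$ almost surely.
   Context: $\mathcal N^\#_{\mathcal Y}$ denotes the boundedly finite $\{0,1,\dots\}\cup\{\infty\}$-valued Borel measures on a complete separable metric space (CSMS) $\mathcal Y$ (Borel $\sigma$-algebra generated by $\xi\mapsto\xi(A)$); for a CSMS $\mathcal K$ with Borel measure $\ell$, $\mathcal N^{\#g}_{\mathbb R\times\mathcal K}$ is the set of $\xi\in\mathcal N^\#_{\mathbb R\times\mathcal K}$ whose ground measure $\xi(\cdot\times\mathcal K)$ is boundedly finite with mass $0$ or $1$ at each time. Non-explosive marked point processes are measurable maps into $\mathcal N^{\#g}_{\mathbb R\times\mathcal K}$. $\theta_t\xi(A)=\xi(A+t)$, $A+t=\{(s+t,u):(s,u)\in A\}$; $\xi|_I$ is the restriction to $I\times\mathcal K$; $\theta_t\xi^-=(\theta_t\xi)|_{(-\infty,0)}$. SDE setting: $N_{\le0}$ is a non-explosive marked point process on $(\Omega_{\le0},\mathcal F_{\le0},\mathbb P_{\le0})$ with no points in $(0,\infty)\times\mathcal K$; $M_{>0}$ is a Poisson process on $\mathbb R\times\mathcal K\times\mathbb R$ with mean measure $dt\,\ell(dm)\,dz$ on $(\Omega_{>0},\mathcal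 F_{>0},\mathbb P_{>0})$; $(\Omega,\mathcal F,\mathbb P)$ is the completion of the product probability space; $M(\omega):=M_{>0}(\omega_{>0})$ for $\omega=(\omega_{\le0},\omega_{>0})$; $\mathcal F_t$ is the $\mathbb P$-completion of $\mathcal F^{N_{\le0}}_t\otimes\mathcal F^{M_{>0}}_t$, where $\mathcal F^{P}_t$ denotes the internal history $\sigma\{P(A\times U):A\subset(-\infty,t]\}$. A solution of the Poisson-driven SDE is an $\mathbb F$-adapted non-explosive marked point process $N$ such that, almost surely, $N(A)=\iint_A\int_{(0,\lambda(\omega,t,m)]}M(\omega,dt,dm,dz)$ for all Borel $A\subset(0,\infty)\times\mathcal K$, with $\lambda(\omega,t,m)=\psi(m\mid\theta_tN(\omega)^-)$, and $N(\omega)|_{(-\infty,0]}=N_{\le0}(\omega_{\le0})$. *)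

(* Defs.v *)
From HB Require Import structures.
From mathcomp Require Import all_boot all_order all_algebra.
From mathcomp Require Import all_classical all_reals all_analysis.
From mathcomp Require Import measurable_realfun.

Set Implicit Arguments.
Unset Strict Implicit.
Unset Printing Implicit Defensive.

Import Order.TTheory GRing.Theory Num.Theory.
Import numFieldNormedType.Exports.
Local Open Scope classical_set_scope.
Local Open Scope ring_scope.

Definition Borel {T : topologicalType} : set (set T) := <<s [set: T], @open T >>.

Definition bdd {R : numDomainType} {Y : pseudoMetricType R} (A : set Y) : Prop :=
  exists (y : Y) (r : R), A `<=` ball y r.

(** A measure [xi : set Y -> \bar R] is an element of N^#_Y: a Borel measure
    (only its values on Borel sets matter), with values in {0,1,...} ∪ {oo},
    finite on bounded Borel sets. *)
Definition Nsharp {R : realType} {Y : pseudoMetricType R}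
    (xi : set Y -> \bar R) : Prop :=
  [/\ xi set0 = 0%E,
      (forall A, Borel A -> (exists n : nat, xi A = (n%:R)%:E) \/ xi A = +oo%E),
      (forall F : nat -> set Y, (forall n, Borel (F n)) -> trivIset setT F ->
          (fun n => (\sum_(0 <= i < n) xi (F i))%E) @ \oo --> xi (\bigcup_n F n))
    & (forall A, Borel A -> bdd A -> (xi A < +oo)%E)].

Definition Nsharpg {R : realType} {X : pseudoMetricType R}
    (xi : set (R * X) -> \bar R) : Prop :=
  [/\ Nsharp xi,
      (forall B : set R, Borel B -> bdd B -> (xi (B `*` [set: X]) < +oo)%E)
    & (forall t : R, (xi ([set t] `*` [set: X]) <= 1)%E)].

Definition meq {T : topologicalType} {R : realType} (xi eta : set T -> \bar R) :=
  forall A, Borel A -> xi A = eta A.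

Definition theta {R : realType} {X : Type} (t : R) (xi : set (R * X) -> \bar R) :
    set (R * X) -> \bar R :=
  fun A => xi [set x | A (x.1 - t, x.2)].

Definition restr {R : realType} {X : Type} (I : set R) (xi : set (R * X) -> \bar R) :
    set (R * X) -> \bar R :=
  fun A => xi (A `&` (I `*` [set: X])).

Definition theta_minus {R : realType} {X : Type} (t : R) (xi : set (R * X) -> \bar R) :=
  restr [set s : R | s < 0] (theta t xi).

Definition Ngen {R : realType} {Y : pseudoMetricType R} : set (set (set Y -> \bar R)) :=
  [set S | exists (A : set Y) (C : set (\bar R)),
     [/\ Borel A, measurable C & S = (fun xi => xi A) @^-1` C]].

(** psi : K x N^#_{R x K} -> [0, oo] is measurable, where K x N^# carries the
    product of the Borel sigma-algebra of K and the sigma-algebra of N^#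
    (generated by the evaluation maps), N^# viewed as a subspace. *)
Definition psi_measurable {R : realType} {K : pseudoMetricType R}
    (psi : K -> (set (R * K) -> \bar R) -> \bar R) : Prop :=
  forall C : set (\bar R), measurable C ->
    exists G : set (K * (set (R * K) -> \bar R)),
      <<s [set: K * (set (R * K) -> \bar R)],
          [set B `*` S | B in Borel & S in Ngen] >> G /\
      [set p | C (psi p.1 p.2)] `&` ([set: K] `*` [set xi | Nsharp xi])
      = G `&` ([set: K] `*` [set xi | Nsharp xi]).

(** Poisson probabilities, with the convention that a Poisson variable with
    infinite mean is a.s. infinite (so never equal to a finite k). *)
Definition ppmf {R : realType} (m : \bar R) (k : nat) : R :=
  match m with
  | r%:E => r ^+ k / k`!%:R * expR (- r)
  | _ => 0
  end.

Definition mean_measure {R : realType} {K : completePseudoMetricType R}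
    (ell : {measure set (g_sigma_algebraType (@open K)) -> \bar R}) :
    set (R * (K * R)) -> \bar R :=
  ((@lebesgue_measure R) \x (ell \x (@lebesgue_measure R)))%E.

Definition poisson_process {R : realType} {X : pseudoMetricType R}
    {d : measure_display} {Om : measurableType d} (P : probability Om R)
    (mu : set (R * X) -> \bar R) (M : Om -> set (R * X) -> \bar R) : Prop :=
  [/\ (forall w, Nsharp (M w)),
      (forall B, Borel B -> measurable_fun [set: Om] (fun w => M w B))
    & (forall (n : nat) (B : 'I_n -> set (R * X)) (k : 'I_n -> nat),
         (forall i, Borel (B i)) ->
         (forall i j, i != j -> B i `&` B j = set0) ->
         P [set w | forall i, M w (B i) = ((k i)%:R)%:E] =
           (\prod_(i < n) ppmf (mu (B i)) (k i))%:E)].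

Definition initial_condition {R : realType} {K : pseudoMetricType R}
    {d : measure_display} {Om : measurableType d}
    (N0 : Om -> set (R * K) -> \bar R) : Prop :=
  [/\ (forall w, Nsharpg (N0 w)),
      (forall A, Borel A -> measurable_fun [set: Om] (fun w => N0 w A))
    & (forall w, N0 w ([set s : R | 0 < s] `*` [set: K]) = 0%E)].

Definition hist {R : realType} {X : topologicalType}
    {d : measure_display} {Om : measurableType d}
    (Q : Om -> set (R * X) -> \bar R) (t : R) : set (set Om) :=
  <<s [set: Om], [set S | exists (A : set R) (U : set X) (C : set (\bar R)),
        [/\ Borel A, A `<=` [set s | s <= t], Borel U, measurable C
          & S = (fun w => Q w (A `*` U)) @^-1` C]] >>.

Definition completion {d : measure_display} {T : measurableType d} {R : realType}
    (P : set T -> \bar R) (G : set (set T)) : set (set T) :=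
  [set A | exists B, G B /\ P.-negligible ((A `\` B) `|` (B `\` A))].

Definition measurable_wrt {T : Type} {R : realType} (S : set (set T))
    (f : T -> \bar R) : Prop :=
  forall C : set (\bar R), measurable C -> S (f @^-1` C).

Definition sde_solution {R : realType} {K : pseudoMetricType R}
    {d1 d2 : measure_display} {Om1 : measurableType d1} {Om2 : measurableType d2}
    (P1 : probability Om1 R) (P2 : probability Om2 R)
    (psi : K -> (set (R * K) -> \bar R) -> \bar R)
    (N0 : Om1 -> set (R * K) -> \bar R)
    (M : Om2 -> set (R * (K * R)) -> \bar R)
    (N : Om1 * Om2 -> set (R * K) -> \bar R) : Prop :=
  let P := (P1 \x P2)%E in
  let F := completion P measurable in
  let Ft t := completion P
      <<s [set: Om1 * Om2], [set S1 `*` S2 | S1 in hist N0 t & S2 in hist M t] >> in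
  let lambda w t m := psi m (theta_minus t (N w)) in
  [/\
      (forall w, Nsharpg (N w)),
      (forall A, Borel A -> measurable_wrt F (fun w => N w A)),
      (forall (t : R) (A : set (R * K)), Borel A ->
         A `<=` [set s | s <= t] `*` [set: K] -> measurable_wrt (Ft t) (fun w => N w A))
    & {ae P, forall w,
        (forall A, Borel A -> A `<=` [set s : R | 0 < s] `*` [set: K] ->
           N w A = M w.2 [set x | A (x.1, x.2.1) /\ 0 < x.2.2 /\
                                  ((x.2.2)%:E <= lambda w x.1 x.2.1)%E]) /\
        meq (restr [set s : R | s <= 0] (N w)) (restr [set s : R | s <= 0] (N0 w.1))}].

(* Main.v *)
Require Import Defs.
From HB Require Import structures.
From mathcomp Require Import all_boot all_order all_algebra.
From mathcomp Require Import all_classical all_reals all_analysis measurable_realfun.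
From mathcomp Require Import lra.
From mathcomp Require Import measurable_realfun.
Import Order.TTheory GRing.Theory Num.Theory.
Import numFieldNormedType.Exports.
Local Open Scope classical_set_scope.
Local Open Scope ring_scope.
Set Implicit Arguments.
Unset Strict Implicit.

Section BorelFacts.
Context {T : topologicalType}.

Lemma Borel_sa : sigma_algebra setT (@Borel T).
Proof. exact: smallest_sigma_algebra. Qed.

Lemma Borel0 : Borel (@set0 T).
Proof. by case: Borel_sa. Qed.

Lemma BorelC (A : set T) : Borel A -> Borel (~` A).
Proof. by case: Borel_sa => _ h _ /h; rewrite setTD. Qed.

Lemma BorelT : Borel (@setT T).
Proof. by rewrite -setC0; apply: BorelC; exact: Borel0. Qed.

Lemma Borel_bigcup (F : (set T)^nat) : (forall n, Borel (F n)) -> Borel (\bigcup_n F n).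
Proof. by case: Borel_sa => _ _; apply. Qed.

Lemma BorelU (A B : set T) : Borel A -> Borel B -> Borel (A `|` B).
Proof.
move=> hA hB; rewrite -(bigcup2E A B); apply: Borel_bigcup.
by case=> [|[|n]] //=; exact: Borel0.
Qed.

Lemma BorelI (A B : set T) : Borel A -> Borel B -> Borel (A `&` B).
Proof.
move=> hA hB; rewrite -[A `&` B]setCK setCI; apply: BorelC; apply: BorelU; exact: BorelC.
Qed.

Lemma BorelD (A B : set T) : Borel A -> Borel B -> Borel (A `\` B).
Proof. by move=> hA hB; apply: BorelI => //; exact: BorelC. Qed.

Lemma Borel_open (A : set T) : open A -> Borel A.
Proof. by move=> oA X [_]; apply. Qed.

Lemma Borel_closed (A : set T) : closed A -> Borel A.
Proof. by rewrite -openC => /Borel_open/BorelC; rewrite setCK. Qed.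

Lemma Borel_bigsetU (F : (set T)^nat) n : (forall i, Borel (F i)) ->
  Borel (\big[setU/set0]_(i < n) F i).
Proof.
move=> hF; elim: n => [|n ih]; first by rewrite big_ord0; exact: Borel0.
by rewrite big_ord_recr /=; apply: BorelU.
Qed.

End BorelFacts.

Lemma Borel_preimage {T U : topologicalType} (f : T -> U) : continuous f ->
  forall A, Borel A -> Borel (f @^-1` A).
Proof.
move=> cf; apply: smallest_sub.
  split; first by rewrite preimage_set0; exact: Borel0.
    by move=> A hA; rewrite setTD preimage_setC; apply: BorelC.
  by move=> F hF; rewrite preimage_bigcup; apply: Borel_bigcup.
move=> A oA; apply: Borel_open; apply: open_comp => // x _; exact: cf.
Qed.

Section NsharpFacts.
Context {R : realType} {Y : pseudoMetricType R}.
Implicit Types (xi : set Y -> \bar R) (A B : set Y).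

Lemma elim_uniq (f : nat -> \bar R) (a b : \bar R) :
  f @ \oo --> a -> f @ \oo --> b -> a = b.
Proof. by move=> h1 h2; exact: (cvg_unique _ h1 h2). Qed.

Lemma Ns_val xi A : Nsharp xi -> Borel A ->
  (exists n : nat, xi A = (n%:R)%:E) \/ xi A = +oo%E.
Proof. by case=> _ h _ _; apply: h. Qed.

Lemma Ns_ge0 xi A : Nsharp xi -> Borel A -> (0 <= xi A)%E.
Proof.
move=> hxi hA; case: (Ns_val hxi hA) => [[n ->]|->]; last exact: leey.
by rewrite lee_fin.
Qed.

Lemma Ns_add2 xi A B : Nsharp xi -> Borel A -> Borel B -> A `&` B = set0 ->
  xi (A `|` B) = (xi A + xi B)%E.
Proof.
move=> hxi hA hB AB; case: hxi => x0 _ hc _.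
have h := hc (bigcup2 A B).
rewrite bigcup2E in h.
apply: (elim_uniq (h _ _)).
- by case=> [|[|n]] //=; exact: Borel0.
- by rewrite -trivIset_bigcup2.
apply: cvg_near_cst; exists 2%N => // -[|[|n]] // _ /=; elim: n => [|n ih].
  by rewrite !big_nat_recr //= big_geq // add0e.
by rewrite big_nat_recr //= ih x0 adde0.
Qed.

Lemma Ns_mono xi A B : Nsharp xi -> Borel A -> Borel B -> A `<=` B ->
  (xi A <= xi B)%E.
Proof.
move=> hxi hA hB AB.
have -> : B = A `|` (B `\` A) by rewrite setDUK.
rewrite Ns_add2 //; last by rewrite setDE setICA setICr setI0.
  by rewrite leeDl // Ns_ge0 //; exact: BorelD.
exact: BorelD.
Qed.

Lemma Ns_sum xi (G : (set Y)^nat) : Nsharp xi -> (forall n, Borel (G n)) ->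
  trivIset setT G -> forall n,
  (\sum_(0 <= i < n) xi (G i))%E = xi (\big[setU/set0]_(i < n) G i).
Proof.
move=> hxi hG tG; elim=> [|n ih].
  by rewrite big_geq // big_ord0; case: hxi.
rewrite big_nat_recr //= ih big_ord_recr /= Ns_add2 //.
- exact: Borel_bigsetU.
rewrite -bigcup_mkord; apply/seteqP; split => // x [[i /= hi Gix] Gnx].
by have := tG i n I I (ex_intro _ x (conj Gix Gnx)) => ein; move: hi; rewrite ein ltnn.
Qed.

Lemma Ns_cvg xi (F : (set Y)^nat) : Nsharp xi -> (forall n, Borel (F n)) ->
  nondecreasing_seq F -> (fun n => xi (F n)) @ \oo --> xi (\bigcup_n F n).
Proof.
move=> hxi hF ndF.
have hG : forall n, Borel (seqD F n).
  by case=> [|n] /=; [exact: hF | apply: BorelD].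
have tG := trivIset_seqD ndF.
have := (let: And4 _ _ hc _ := hxi in hc) _ hG tG.
rewrite eq_bigcup_seqD -cvg_shiftS /=.
suff -> : (fun n => xi (F n)) =
  (fun n => (\sum_(0 <= i < n.+1) xi (seqD F i))%E) by [].
by apply: funext => n /=; rewrite Ns_sum // nondecreasing_bigsetU_seqD.
Qed.

Lemma Ns_cont xi xi' (F : (set Y)^nat) : Nsharp xi -> Nsharp xi' ->
  (forall n, Borel (F n)) -> nondecreasing_seq F ->
  (forall n, xi (F n) = xi' (F n)) -> xi (\bigcup_n F n) = xi' (\bigcup_n F n).
Proof.
move=> h h' hF ndF e; apply: (elim_uniq (Ns_cvg h hF ndF)).
by under eq_fun do rewrite e; exact: Ns_cvg.
Qed.

End NsharpFacts.

Section PsiFacts.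
Context {R : realType} {K : pseudoMetricType R}.
Local Notation NM := (set (R * K) -> \bar R).

Lemma meq_sym (xi eta : NM) : meq xi eta -> meq eta xi.
Proof. by move=> h A hA; rewrite h. Qed.

Lemma gen_sat (G : set (K * NM)) :
  <<s [set: K * NM], [set B `*` S | B in (@Borel K) & S in Ngen] >> G ->
  forall m (xi xi' : NM), meq xi xi' -> G (m, xi) -> G (m, xi').
Proof.
move: G; apply: smallest_sub.
  split.
  - by [].
  - move=> A hA m xi xi' e [_ nA]; split => // Axi'; apply: nA.
    exact: (hA m xi' xi (meq_sym e)).
  - by move=> F hF m xi xi' e [n _ Fn]; exists n => //; exact: (hF n m xi).
move=> _ [B hB [_ [A [C [hA hC ->]]] <-]] m xi xi' e [/= Bm Cx].
by split => //=; rewrite /preimage /= -e.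
Qed.

Lemma psi_local (psi : K -> NM -> \bar R) : psi_measurable psi ->
  forall m (xi xi' : NM), Nsharp xi -> Nsharp xi' -> meq xi xi' ->
  psi m xi = psi m xi'.
Proof.
move=> pm m xi xi' h h' e.
have mC : measurable ([set psi m xi] : set (\bar R)).
  by rewrite -set_itv1; exact: emeasurable_itv.
have [G [hG hE]] := pm _ mC.
have : ([set p | [set psi m xi] (psi p.1 p.2)] `&` ([set: K] `*` [set xi | Nsharp xi]))
  (m, xi) by split.
rewrite hE => -[Gm _].
have Gm' := gen_sat hG e Gm.
have : (G `&` ([set: K] `*` [set xi | Nsharp xi])) (m, xi') by split.
by rewrite -hE => -[/= ->].
Qed.

Definition sh (u : R) (x : R * K) : R * K := (x.1 - u, x.2).
Definition Hneg : set (R * K) := [set s : R | s < 0] `*` [set: K].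

Lemma sh_cont u : continuous (sh u).
Proof.
move=> [a b]; rewrite /sh /=.
have h1 : (fun x : R * K => x.1 - u) @ (a, b) --> a - u.
  apply: cvgB; last exact: cvg_cst.
  exact: cvg_fst.
have h2 : (fun x : R * K => x.2) @ (a, b) --> b by exact: cvg_snd.
exact: (cvg_pair h1 h2).
Qed.

Lemma fst_cont : continuous (@fst R K).
Proof. move=> x; exact: cvg_fst. Qed.

Lemma Borel_fst (S : set R) : Borel S -> Borel (S `*` [set: K]).
Proof.
move=> hS; have -> : S `*` [set: K] = fst @^-1` S.
  by apply/seteqP; split => x //= [].
exact: Borel_preimage fst_cont _ hS.
Qed.

Lemma Borel_Hneg : Borel Hneg.
Proof. apply: Borel_fst; apply: Borel_open; exact: open_lt. Qed.

Lemma Borel_shI u A : Borel A -> Borel (sh u @^-1` (A `&` Hneg)).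
Proof.
move=> hA; apply: Borel_preimage; first exact: sh_cont.
by apply: BorelI => //; exact: Borel_Hneg.
Qed.

Lemma theta_minus_eq u (xi : NM) A :
  theta_minus u xi A = xi (sh u @^-1` (A `&` Hneg)).
Proof. by []. Qed.

Lemma Ns_theta u (xi : NM) : Nsharp xi -> Nsharp (theta_minus u xi).
Proof.
case=> x0 hv hc hb; split.
- by rewrite theta_minus_eq set0I preimage_set0.
- by move=> A hA; rewrite theta_minus_eq; apply: hv; exact: Borel_shI.
- move=> F hF tF; rewrite theta_minus_eq setI_bigcupl preimage_bigcup.
  apply: (hc (fun n => sh u @^-1` (F n `&` Hneg))).
    by move=> n; exact: Borel_shI.
  move=> i j _ _ [x [[Fi _] [Fj _]]]; apply: tF => //.
  by exists (sh u x).
- move=> A hA [y [r Ar]]; rewrite theta_minus_eq; apply: hb.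
    exact: Borel_shI.
  exists (y.1 + u, y.2), r => x [/Ar [b1 b2] _]; split => //=.
  move: b1; rewrite -ball_normE /ball_ /=.
  by rewrite opprB addrA.
Qed.

End PsiFacts.

Section Pathwise.
Context {R : realType} {K : pseudoMetricType R}.
Local Notation NM := (set (R * K) -> \bar R).
Variable psi : K -> NM -> \bar R.
Hypothesis pm : psi_measurable psi.

Definition Sset (xi : NM) (A : set (R * K)) : set (R * (K * R)) :=
  [set x | A (x.1, x.2.1) /\ 0 < x.2.2 /\
           ((x.2.2)%:E <= psi x.2.1 (theta_minus x.1 xi))%E].

Definition Le (c : R) : set (R * K) := [set x | x.1 <= c].
Definition Gt (c : R) : set (R * K) := [set x | c < x.1].

Lemma Borel_Le c : Borel (Le c).
Proof.
have -> : Le c = [set s | s <= c] `*` [set: K] by apply/seteqP; split => x //= [].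
apply: Borel_fst; apply: Borel_closed; exact: closed_le.
Qed.

Lemma Borel_Gt c : Borel (Gt c).
Proof.
have -> : Gt c = [set s | c < s] `*` [set: K] by apply/seteqP; split => x //= [].
apply: Borel_fst; apply: Borel_open; exact: open_gt.
Qed.


Lemma vanish (xi : NM) : Nsharpg xi -> forall t, exists n : nat,
  xi (Gt t `&` Le (t + n.+1%:R^-1)) = 0%E.
Proof.
move=> hg t; have hN : Nsharp xi by case: hg.
pose C1 := Gt t `&` Le (t + 1).
have bC1 : Borel C1 by apply: BorelI; [exact: Borel_Gt | exact: Borel_Le].
have fin : (xi C1 < +oo)%E.
  have -> : C1 = ([set s | t < s] `&` [set s | s <= t + 1]) `*` [set: K].
    by apply/seteqP; split => x /= [] //.
  case: hg => _ hb _; apply: hb.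
    apply: BorelI; [apply: Borel_open; exact: open_gt
                   | apply: Borel_closed; exact: closed_le].
  exists t, 2 => s [/= a b]; rewrite -ball_normE /ball_ /=.
  rewrite distrC ger0_norm; first by lra.
  by rewrite subr_ge0 ltW.
have [k hk] : exists k : nat, xi C1 = (k%:R)%:E.
  case: (Ns_val hN bC1) => // h; by rewrite h ltxx in fin.
pose F n := Gt (t + n.+1%:R^-1) `&` Le (t + 1).
have hF : forall n, Borel (F n).
  by move=> n; apply: BorelI; [exact: Borel_Gt | exact: Borel_Le].
have ndF : nondecreasing_seq F.
  move=> n m nm; apply/subsetPset => x [hx1 hx2]; split => //.
  apply: le_lt_trans hx1; rewrite lerD2l lef_pV2 ?posrE ?ltr0Sn //.
  by rewrite ler_nat.
have UF : \bigcup_n F n = C1.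
  apply/seteqP; split => [x [n _ [hx1 hx2]]|x [hx1 hx2]].
    split => //; apply: lt_trans hx1; rewrite /Gt /=.
    by rewrite ltrDl invr_gt0 ltr0Sn.
  have d0 : 0 < x.1 - t by rewrite subr_gt0.
  exists (Num.truncn (x.1 - t)^-1) => //; split => //; rewrite /Gt /=.
  have : (Num.truncn (x.1 - t)^-1).+1%:R^-1 < x.1 - t.
    rewrite -invf_plt ?posrE ?ltr0Sn //; exact: truncnS_gt.
  move: (_.+1%:R^-1) => a hh; lra.
have cv := Ns_cvg hN hF ndF; rewrite UF hk in cv.
have FC : forall n, F n `<=` C1.
  move=> n x [hx1 hx2]; split => //; apply: lt_trans hx1; rewrite /Gt /=.
  by rewrite ltrDl invr_gt0 ltr0Sn.
have [n hn] : exists n, xi (F n) = (k%:R)%:E.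
  apply: contrapT => /forallNP hne.
  have : (((k%:R : R))%:E <= (k%:R - 1 : R)%:E)%E.
    apply: cvge_le cv; apply: nearW => n.
    have le : (xi (F n) <= (k%:R)%:E)%E by rewrite -hk; apply: Ns_mono.
    case: (Ns_val hN (hF n)) => [[j hj]|hj]; rewrite hj in le *; last first.
      by move: le; rewrite leye_eq.
    rewrite lee_fin in le; rewrite lee_fin.
    have jk : (j < k)%N.
      rewrite ltn_neqAle -(ler_nat R) le andbT; apply/eqP => e.
      by apply: (hne n); rewrite hj e.
    by rewrite lerBrDr natr1 ler_nat.
  by rewrite lee_fin; lra.
exists n.
have hinv : n.+1%:R^-1 <= 1 :> R by rewrite invf_le1 ?ltr0Sn // ler1n.
have hinv0 : 0 < n.+1%:R^-1 :> R by rewrite invr_gt0 ltr0Sn.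
have bCn : Borel (Gt t `&` Le (t + n.+1%:R^-1)).
  by apply: BorelI; [exact: Borel_Gt | exact: Borel_Le].
have eC : C1 = (Gt t `&` Le (t + n.+1%:R^-1)) `|` F n.
  apply/seteqP; split => [x [hx1 hx2]|x [[hx1 hx2]|[hx1 hx2]]].
  - rewrite /Le /Gt /= in hx1 hx2 *.
    by case: (leP x.1 (t + n.+1%:R^-1)) => h; [left|right].
  - split => //; rewrite /Le /= in hx2 *; move: (n.+1%:R^-1) hinv hx2 => a ha hx; lra.
  - exact: (FC n x (conj hx1 hx2)).
have dC : (Gt t `&` Le (t + n.+1%:R^-1)) `&` F n = set0.
  apply/seteqP; split => // x [[_ a] [b _]]; rewrite /Le /Gt /= in a b.
  by move: (le_lt_trans a b); rewrite ltxx.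
have := hk; rewrite eC (Ns_add2 hN bCn (hF n) dC) hn.
case: (Ns_val hN bCn) => [[j ->]|->] //.
move/eqP; rewrite -EFinD eqe => /eqP hj.
by congr (_%:E); lra.
Qed.

Variables (xi xi' xi0 : NM) (Mw : set (R * (K * R)) -> \bar R).
Hypotheses (hg : Nsharpg xi) (hg' : Nsharpg xi').
Hypothesis he : forall A, Borel A -> A `<=` [set s : R | 0 < s] `*` [set: K] ->
  xi A = Mw (Sset xi A).
Hypothesis he' : forall A, Borel A -> A `<=` [set s : R | 0 < s] `*` [set: K] ->
  xi' A = Mw (Sset xi' A).
Hypothesis h0 : meq (restr [set s : R | s <= 0] xi) (restr [set s : R | s <= 0] xi0).
Hypothesis h0' : meq (restr [set s : R | s <= 0] xi') (restr [set s : R | s <= 0] xi0).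

Let hN : Nsharp xi. Proof. by case: hg. Qed.
Let hN' : Nsharp xi'. Proof. by case: hg'. Qed.

Definition agree t := forall A, Borel A -> A `<=` Le t -> xi A = xi' A.

Lemma agree0 : agree 0.
Proof.
move=> A hA sA.
have eA : A `&` ([set s : R | s <= 0] `*` [set: K]) = A.
  by apply/setIidl => x /sA.
move: (h0 hA) (h0' hA); rewrite /restr eA => -> ->.
by [].
Qed.

Lemma agree_le s t : s <= t -> agree t -> agree s.
Proof.
move=> st h A hA sA; apply: h => // x /sA; rewrite /Le /= => xs.
exact: le_trans xs st.
Qed.

Lemma agree_lt t : (forall s, s < t -> agree s) ->
  forall A, Borel A -> A `<=` [set x | x.1 < t] -> xi A = xi' A.
Proof.
move=> h A hA sA.
pose F n := A `&` Le (t - n.+1%:R^-1).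
have hF : forall n, Borel (F n) by move=> n; apply: BorelI => //; exact: Borel_Le.
have ndF : nondecreasing_seq F.
  move=> n m nm; apply/subsetPset => x [Ax]; rewrite /Le /= => hx; split => //.
  apply: (le_trans hx); rewrite lerD2l lerN2 lef_pV2 ?posrE ?ltr0Sn //.
  by rewrite ler_nat.
have UF : \bigcup_n F n = A.
  apply/seteqP; split => [x [n _ []]//|x Ax].
  have d0 : 0 < t - x.1 by rewrite subr_gt0; exact: sA.
  exists (Num.truncn (t - x.1)^-1) => //; split => //; rewrite /Le /=.
  rewrite lerBrDr addrC -lerBrDr ltW //.
  rewrite -invf_plt ?posrE ?ltr0Sn //; exact: truncnS_gt.
rewrite -UF; apply: (Ns_cont hN hN' hF ndF) => n.
apply: (h (t - n.+1%:R^-1)); last by move=> x [].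
  by rewrite ltrBlDr ltrDl invr_gt0 ltr0Sn.
exact: hF.
Qed.

Lemma psi_eq t : (forall s, s < t -> agree s) -> forall u m, u <= t ->
  psi m (theta_minus u xi) = psi m (theta_minus u xi').
Proof.
move=> h u m ut; apply: (psi_local pm); try exact: Ns_theta.
move=> B hB; rewrite !theta_minus_eq; apply: (agree_lt h).
  exact: Borel_shI.
move=> x [_ /=]; rewrite /Hneg /= => -[x0 _].
by apply: (lt_le_trans _ ut); rewrite -subr_lt0.
Qed.

Lemma agree_step t : (forall s, s < t -> agree s) -> agree t.
Proof.
move=> h A hA sA.
have h1 : Borel (A `&` Le 0) by apply: BorelI => //; exact: Borel_Le.
have h2 : Borel (A `&` Gt 0) by apply: BorelI => //; exact: Borel_Gt.
have eA : A = (A `&` Le 0) `|` (A `&` Gt 0).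
  rewrite -setIUr; apply/esym/setIidl => x _.
  by rewrite /Le /Gt /=; case: (leP x.1 0); [left|right].
have dA : (A `&` Le 0) `&` (A `&` Gt 0) = set0.
  apply/seteqP; split => // x [[_]]; rewrite /Le /Gt /= => a [_ b].
  by move: (le_lt_trans a b); rewrite ltxx.
rewrite eA (Ns_add2 hN h1 h2 dA) (Ns_add2 hN' h1 h2 dA).
congr (_ + _)%E; first by apply: agree0 => // x [].
have s2 : A `&` Gt 0 `<=` [set s : R | 0 < s] `*` [set: K] by move=> x [_ ?].
rewrite (he h2 s2) (he' h2 s2); congr (Mw _).
apply/seteqP; split => x [hx [hz hl]]; split => //; split => //.
  rewrite -(psi_eq h) //; case: hx => /sA //.
rewrite (psi_eq h) //; case: hx => /sA //.
Qed.

Lemma agree_ext t : agree t -> exists2 e, 0 < e & agree (t + e).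
Proof.
move=> at_.
have [n hn] := vanish hg t; have [n' hn'] := vanish hg' t.
exists ((maxn n n').+1%:R^-1); first by rewrite invr_gt0 ltr0Sn.
move=> A hA sA.
have h1 : Borel (A `&` Le t) by apply: BorelI => //; exact: Borel_Le.
have h2 : Borel (A `&` Gt t) by apply: BorelI => //; exact: Borel_Gt.
have eA : A = (A `&` Le t) `|` (A `&` Gt t).
  rewrite -setIUr; apply/esym/setIidl => x _.
  by rewrite /Le /Gt /=; case: (leP x.1 t); [left|right].
have dA : (A `&` Le t) `&` (A `&` Gt t) = set0.
  apply/seteqP; split => // x [[_]]; rewrite /Le /Gt /= => a [_ b].
  by move: (le_lt_trans a b); rewrite ltxx.
have z : forall (eta : NM) (m : nat), Nsharp eta -> (m <= maxn n n')%N ->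
    eta (Gt t `&` Le (t + m.+1%:R^-1)) = 0%E -> eta (A `&` Gt t) = 0%E.
  move=> eta m he0 hm hz; apply/eqP; rewrite eq_le Ns_ge0 // andbT -hz.
  apply: Ns_mono => //; first by apply: BorelI; [exact: Borel_Gt | exact: Borel_Le].
  move=> x [/sA hx hx2]; split => //; rewrite /Le /= in hx *.
  apply: (le_trans hx); rewrite lerD2l lef_pV2 ?posrE ?ltr0Sn //.
  by rewrite ler_nat.
rewrite eA (Ns_add2 hN h1 h2 dA) (Ns_add2 hN' h1 h2 dA).
rewrite (z xi n hN (leq_maxl _ _) hn) (z xi' n' hN' (leq_maxr _ _) hn').
by rewrite (at_ _ h1) // => x [].
Qed.

Lemma agree_all t : agree t.
Proof.
apply: contrapT => nt1.
pose E := [set s | agree s].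
have ub : ubound E t.
  move=> s Es; rewrite leNgt; apply/negP => lt; apply: nt1.
  exact: agree_le (ltW lt) Es.
have hs : has_sup E by split; [exists 0; exact: agree0 | exists t].
have hlt : forall s, s < sup E -> agree s.
  move=> s lt.
  have e0 : 0 < sup E - s by rewrite subr_gt0.
  have [e Ee se] := sup_adherent e0 hs.
  apply: agree_le Ee; move: se; rewrite opprB addrCA subrr addr0 => /ltW //.
have [e e0 ae] := agree_ext (agree_step hlt).
have := sup_upper_bound hs ae.
by rewrite gerDl leNgt e0.
Qed.

Lemma pathwise : meq xi xi'.
Proof.
move=> A hA.
pose F n := A `&` Le n%:R.
have hF : forall n, Borel (F n) by move=> n; apply: BorelI => //; exact: Borel_Le.
have ndF : nondecreasing_seq F.
  move=> n m nm; apply/subsetPset => x [Ax]; rewrite /Le /= => hx; split => //.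
  by apply: (le_trans hx); rewrite ler_nat.
have UF : \bigcup_n F n = A.
  apply/seteqP; split => [x [n _ []]//|x Ax].
  exists (Num.truncn x.1).+1 => //; split => //; rewrite /Le /=.
  exact/ltW/truncnS_gt.
rewrite -UF; apply: (Ns_cont hN hN' hF ndF) => n.
by apply: (@agree_all (n%:R) _ (hF n)) => x [].
Qed.

End Pathwise.

Unset Implicit Arguments.
Set Strict Implicit.

Theorem theorem2p20
  (R : realType)
  (* K: a complete separable metric space, with a Borel measure ell *)
  (K : completePseudoMetricType R)
  (K_hausdorff : hausdorff_space K)
  (K_separable : exists D : set K, countable D /\ closure D = [set: K])
  (ell : {measure set (g_sigma_algebraType (@open K)) -> \bar R})
  (* intensity functional psi : K x N^#_{R x K} -> [0, oo], measurable *)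
  (psi : K -> (set (R * K) -> \bar R) -> \bar R)
  (psi_meas : psi_measurable psi)
  (psi_ge0 : forall m xi, Nsharp xi -> (0 <= psi m xi)%E)
  (* the two probability spaces *)
  (d1 d2 : measure_display)
  (Om1 : measurableType d1) (Om2 : measurableType d2)
  (P1 : probability Om1 R) (P2 : probability Om2 R)
  (* initial condition N_{<=0} on Om1 *)
  (N0 : Om1 -> set (R * K) -> \bar R)
  (hN0 : initial_condition N0)
  (* driving Poisson process M_{>0} on R x K x R with mean dt ell(dm) dz *)
  (M : Om2 -> set (R * (K * R)) -> \bar R)
  (hM : poisson_process P2 (mean_measure ell) M)
  (* two solutions *)
  (N N' : Om1 * Om2 -> set (R * K) -> \bar R)
  (hN : sde_solution P1 P2 psi N0 M N)
  (hN' : sde_solution P1 P2 psi N0 M N') :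
  {ae (P1 \x P2)%E, forall w, meq (N w) (N' w)}.
Proof.
case: hN => hNg _ _ hae; case: hN' => hNg' _ _ hae'.
move: hae hae'; apply: filterS2 => w [he h0] [he' h0'].
exact: (pathwise psi_meas (hNg w) (hNg' w) he he' h0 h0').
Qed.
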